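(* Let $(A,\succ,\prec)$ be an anti-pre-Novikov algebra and $s=\sum_i a_i\otimes b_i\in A\otimes A$ such that $s+\tau(s)$ is invariant. The following are equivalent: (a) $P(s)=0$; (b) $P_3(s)=0$; (c) $P_1(s)=P_2(s)=0$; (d) $P_4(s)=P_5(s)=0$; (e) $P(\tau(s))=0$, where (sums over $i,j$) $P(s)=\sum a_i\circ a_j\otimes b_i\otimes b_j+\sum a_j\otimes a_i\otimes(b_i\odot b_j)+\sum a_i\otimes(b_i\prec a_j)\otimes b_j$, $P_1(s)=\sum a_i\prec a_j\otimes b_i\otimes b_j-\sum a_i\otimes a_j\otimes(b_i\odot b_j)+\sum a_i\otimes(b_i\circ a_j)\otimes b_j$, $P_2(s)=\sum a_i\succ a_j\otimes b_i\otimes b_j+\sum a_i\otimes a_j\otimes(b_i\star b_j)-\sum a_i\otimes(b_i\succ a_j)\otimes b_j$, $P_3(s)=\sum a_i\otimes a_j\otimes(b_i\circ b_j)-\sum a_i\prec a_j\otimes b_j\otimes b_i-\sum a_i\otimes(b_i\odot a_j)\otimes b_j$, $P_4(s)=\sum a_i\circ a_j\otimes b_j\otimes b_i-\sum a_i\otimes a_j\otimes(b_i\prec b_j)-\sum a_j\otimes(a_i\odot b_j)\otimes b_i$, $P_5(s)=\sum a_i\otimes(b_i\star a_j)\otimes b_j-\sum a_i\succ a_j\otimes b_j\otimes b_i-\sum a_i\otimes a_j\otimes(b_i\succ b_j)$, and $P(\tau(s))=\sum b_i\circ b_j\otimes a_i\otimes a_j+\sum b_j\otimes b_i\otimes(a_i\odot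 a_j)+\sum b_i\otimes(a_i\prec b_j)\otimes a_j$.
   Context: $A$ is finite-dimensional over a field $k$. An anti-pre-Novikov algebra is $(A,\succ,\prec)$ such that with $x\circ y=x\succ y+x\prec y$: $(x\circ y-y\circ x)\succ z=y\succ(x\succ z)-x\succ(y\succ z)$; $x\prec(y\circ z)=(y\succ x)\prec z-(x\prec y)\prec z-y\succ(x\prec z)$; $(x\circ y)\succ z=-(x\succ z)\prec y$; $(x\prec y)\prec z=(x\prec z)\prec y$; $(x\circ y-y\circ x)\prec z=x\succ(y\circ z)-y\succ(x\circ z)$. Further $x\odot y=x\succ y+y\prec x$, $x\star y=x\circ y+y\circ x$; $L_\ast(x)y=x\ast y$, $R_\ast(x)y=y\ast x$; $L_{\star}=L_{\circ}+R_{\circ}$, $L_{\odot}=L_{\succ}+R_{\prec}$. $\tau$ is the flip. $r\in A\otimes A$ is invariant if $(I\otimes L_{\star}(x)-L_{\succ}(x)\otimes I)r=0$ and $(L_{\circ}(x)\otimes I-I\otimes L_{\odot}(x))r=0$ for all $x\in A$. The equation $P(s)=0$ is the anti-pre-Novikov Yang–Baxter equation. *)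

(* Defs.v *)
(* A finite-dimensional algebra over a field K is modelled as
   a vectType K; tensors in A(x)A and A(x)A(x)A are represented by their
   coordinate arrays with respect to the basis vbasis fullv of A. *)
From HB Require Import structures.
From mathcomp Require Import all_boot all_algebra.
Set Implicit Arguments. Unset Strict Implicit. Unset Printing Implicit Defensive.
Import GRing.Theory.
Local Open Scope ring_scope.

Section AntiPreNovikov.
Variables (K : fieldType) (A : vectType K).

Definition dimA : nat := \dim (fullv : {vspace A}).

Definition crd (x : A) (i : 'I_dimA) : K := coord (vbasis (fullv : {vspace A})) i x.

Definition tens2 (x y : A) : {ffun 'I_dimA * 'I_dimA -> K} :=
  [ffun p => crd x p.1 * crd y p.2].

Definition tens3 (x y z : A) : {ffun 'I_dimA * 'I_dimA * 'I_dimA -> K} :=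
  [ffun p => crd x p.1.1 * crd y p.1.2 * crd z p.2].

Definition is_bilinear (f : A -> A -> A) : Prop :=
  (forall x (c : K) u v, f x (c *: u + v) = c *: f x u + f x v) /\
  (forall y (c : K) u v, f (c *: u + v) y = c *: f u y + f v y).

Variables (sc pr : A -> A -> A). (* sc = succ, pr = prec *)

Definition circ x y := sc x y + pr x y.
Definition odot x y := sc x y + pr y x.
Definition star x y := circ x y + circ y x.

Definition anti_pre_Novikov : Prop :=
  is_bilinear sc /\ is_bilinear pr /\
  forall x y z : A,
  [/\ sc (circ x y - circ y x) z = sc y (sc x z) - sc x (sc y z),
      pr x (circ y z) = pr (sc y x) z - pr (pr x y) z - sc y (pr x z),
      sc (circ x y) z = - pr (sc x z) y,
      pr (pr x y) z = pr (pr x z) y &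
      pr (circ x y - circ y x) z = sc x (circ y z) - sc y (circ x z)].

(* r = \sum_(p <- r) p.1 (x) p.2 is invariant *)
Definition inv_tensor (r : seq (A * A)) : Prop :=
  forall x : A,
    \sum_(p <- r) (tens2 p.1 (star x p.2) - tens2 (sc x p.1) p.2) = 0 /\
    \sum_(p <- r) (tens2 (circ x p.1) p.2 - tens2 p.1 (odot x p.2)) = 0.

(* s = \sum_(i < m) a i (x) b i ;  s + tau(s) as a list of pure tensors *)
Definition s_plus_tau (m : nat) (a b : 'I_m -> A) : seq (A * A) :=
  [seq (a i, b i) | i <- enum 'I_m] ++ [seq (b i, a i) | i <- enum 'I_m].

Variables (m : nat) (a b : 'I_m -> A).

Definition P :=
  \sum_(i < m) \sum_(j < m)
    (tens3 (circ (a i) (a j)) (b i) (b j) + tens3 (a j) (a i) (odot (b i) (b j))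
     + tens3 (a i) (pr (b i) (a j)) (b j)).

Definition P1 :=
  \sum_(i < m) \sum_(j < m)
    (tens3 (pr (a i) (a j)) (b i) (b j) - tens3 (a i) (a j) (odot (b i) (b j))
     + tens3 (a i) (circ (b i) (a j)) (b j)).

Definition P2 :=
  \sum_(i < m) \sum_(j < m)
    (tens3 (sc (a i) (a j)) (b i) (b j) + tens3 (a i) (a j) (star (b i) (b j))
     - tens3 (a i) (sc (b i) (a j)) (b j)).

Definition P3 :=
  \sum_(i < m) \sum_(j < m)
    (tens3 (a i) (a j) (circ (b i) (b j)) - tens3 (pr (a i) (a j)) (b j) (b i)
     - tens3 (a i) (odot (b i) (a j)) (b j)).

Definition P4 :=
  \sum_(i < m) \sum_(j < m)
    (tens3 (circ (a i) (a j)) (b j) (b i) - tens3 (a i) (a j) (pr (b i) (b j))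
     - tens3 (a j) (odot (a i) (b j)) (b i)).

Definition P5 :=
  \sum_(i < m) \sum_(j < m)
    (tens3 (a i) (star (b i) (a j)) (b j) - tens3 (sc (a i) (a j)) (b j) (b i)
     - tens3 (a i) (a j) (sc (b i) (b j))).

End AntiPreNovikov.

(* Main.v *)
Require Import Defs.
From HB Require Import structures.
From mathcomp Require Import all_boot all_algebra ring.
Set Implicit Arguments. Unset Strict Implicit. Unset Printing Implicit Defensive.
Import GRing.Theory.
Local Open Scope ring_scope.

Section Aux.
Variables (K : fieldType) (A : vectType K) (sc pr : A -> A -> A) (m : nat) (a b : 'I_m -> A).

Definition dsum (F : 'I_m -> 'I_m -> K) := \sum_(i < m) \sum_(j < m) F i j.

Lemma dsumD F G : dsum F + dsum G = dsum (fun i j => F i j + G i j).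
Proof. rewrite /dsum -big_split; apply eq_bigr => i _; by rewrite -big_split. Qed.
Lemma dsumN F : - dsum F = dsum (fun i j => - F i j).
Proof. rewrite /dsum -sumrN; apply eq_bigr => i _; by rewrite -sumrN. Qed.
Lemma trick (S F : 'I_m -> 'I_m -> K) : (forall i j, F i j = S i j - S j i) -> dsum F = 0.
Proof.
move=> H; rewrite /dsum (eq_bigr (fun i => \sum_j (S i j - S j i))); last first.
  by move=> i _; apply eq_bigr => j _; rewrite H.
under eq_bigr do rewrite sumrB.
by rewrite sumrB [X in _ - X]exchange_big subrr.
Qed.

Lemma crdD (x y : A) k : crd (x + y) k = crd x k + crd y k.
Proof. by rewrite /crd linearD. Qed.

Lemma t3E (x y z : A) w0 w1 w2 : tens3 x y z ((w0, w1), w2) = crd x w0 * crd y w1 * crd z w2.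
Proof. by rewrite ffunE. Qed.

Lemma sum_spt (F : A * A -> K) : \sum_(p <- s_plus_tau a b) F p = \sum_j (F (a j, b j) + F (b j, a j)).
Proof. rewrite big_cat !big_map big_split /=; by rewrite [index_enum _]unlock. Qed.

Definition R1t (x : A) (j : 'I_m) u v := crd (a j) u * crd (star sc pr x (b j)) v - crd (sc x (a j)) u * crd (b j) v + (crd (b j) u * crd (star sc pr x (a j)) v - crd (sc x (b j)) u * crd (a j) v).
Definition R2t (x : A) (j : 'I_m) u v := crd (circ sc pr x (a j)) u * crd (b j) v - crd (a j) u * crd (odot sc pr x (b j)) v + (crd (circ sc pr x (b j)) u * crd (a j) v - crd (b j) u * crd (odot sc pr x (a j)) v).

Lemma R1_0 (x : A) u v : inv_tensor sc pr (s_plus_tau a b) -> \sum_j R1t x j u v = 0.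
Proof.
move=> /(_ x) [/ffunP /(_ (u, v)) H _]; move: H.
rewrite ffunE sum_ffunE sum_spt => H.
apply: (etrans _ H); apply eq_bigr => j _.
by rewrite !ffunE /=.
Qed.
Lemma R2_0 (x : A) u v : inv_tensor sc pr (s_plus_tau a b) -> \sum_j R2t x j u v = 0.
Proof.
move=> /(_ x) [_ /ffunP /(_ (u, v)) H]; move: H.
rewrite ffunE sum_ffunE sum_spt => H.
apply: (etrans _ H); apply eq_bigr => j _.
by rewrite !ffunE /=.
Qed.

Definition RS1 (y x : 'I_m -> A) r u v := \sum_i crd (y i) r * \sum_j R1t (x i) j u v.
Definition RS2 (y x : 'I_m -> A) r u v := \sum_i crd (y i) r * \sum_j R2t (x i) j u v.
Lemma RS1E y x r u v : RS1 y x r u v = dsum (fun i j => crd (y i) r * R1t (x i) j u v).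
Proof. apply eq_bigr => i _; by rewrite mulr_sumr. Qed.
Lemma RS2E y x r u v : RS2 y x r u v = dsum (fun i j => crd (y i) r * R2t (x i) j u v).
Proof. apply eq_bigr => i _; by rewrite mulr_sumr. Qed.
Lemma RS1_0 y x r u v : inv_tensor sc pr (s_plus_tau a b) -> RS1 y x r u v = 0.
Proof. move=> H; rewrite /RS1 big1 // => i _; by rewrite R1_0 ?mulr0. Qed.
Lemma RS2_0 y x r u v : inv_tensor sc pr (s_plus_tau a b) -> RS2 y x r u v = 0.
Proof. move=> H; rewrite /RS2 big1 // => i _; by rewrite R2_0 ?mulr0. Qed.

Lemma ffE (F : 'I_m -> 'I_m -> {ffun 'I_(dimA A) * 'I_(dimA A) * 'I_(dimA A) -> K}) w :
  (\sum_(i < m) \sum_(j < m) F i j) w = dsum (fun i j => F i j w).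
Proof. rewrite sum_ffunE; apply eq_bigr => i _; by rewrite sum_ffunE. Qed.
End Aux.

Theorem mainTheorem11 (K : fieldType) (A : vectType K) (sc pr : A -> A -> A)
  (m : nat) (a b : 'I_m -> A) :
  anti_pre_Novikov sc pr ->
  inv_tensor sc pr (s_plus_tau a b) ->
  [<-> P sc pr a b = 0;
       P3 sc pr a b = 0;
       P1 sc pr a b = 0 /\ P2 sc pr a b = 0;
       P4 sc pr a b = 0 /\ P5 sc pr a b = 0;
       P sc pr b a = 0].
Proof.
move=> _ Hinv.
have r1 : forall y x r u v, RS1 sc pr a b y x r u v = 0 by move=> *; exact: RS1_0.
have r2 : forall y x r u v, RS2 sc pr a b y x r u v = 0 by move=> *; exact: RS2_0.
tfae.
- move=> HP; have hP q : P sc pr a b q = 0 by rewrite HP ffunE.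
  apply/ffunP => [[[w0 w1] w2]]; rewrite ffunE.
  have E : P3 sc pr a b ((w0, w1), w2) = 0 + P sc pr a b ((w0, w1), w2) + P sc pr a b ((w1, w0), w2) - P sc pr a b ((w2, w1), w0) - RS1 sc pr a b b a w2 w0 w1 - RS1 sc pr a b b a w2 w1 w0 + RS1 sc pr a b b a w0 w1 w2 - RS2 sc pr a b b a w0 w2 w1 - RS2 sc pr a b a b w1 w2 w0.
    apply/eqP; rewrite -subr_eq0; apply/eqP.
    rewrite !ffE ?RS1E ?RS2E ?add0r ?opprD ?opprK ?dsumN ?dsumD.
    apply: (trick (S := fun i j => 0 + (crd (b j) w0 * crd (b i) w1 * crd (sc (a i) (a j)) w2) + (crd (b j) w0 * crd (b i) w1 * crd (pr (a i) (a j)) w2) + (crd (b j) w0 * crd (pr (b i) (a j)) w1 * crd (a i) w2) + (crd (a j) w0 * crd (pr (a i) (b j)) w1 * crd (b i) w2) + (crd (a j) w0 * crd (sc (b j) (a i)) w1 * crd (b i) w2) + (crd (a j) w0 * crd (pr (b j) (a i)) w1 * crd (b i) w2) + (crd (b j) w0 * crd (pr (a i) (a j)) w1 * crd (b i) w2) + (crd (b j) w0 * crd (sc (a j) (a i)) w1 * crd (b i) w2) + (crd (b j) w0 * crd (pr (a j) (a i)) w1 * crd (b i) w2) + (crd (sc (b j) (a i)) w0 * crd (a j) w1 * crd (b i) w2) + (crd (pr (b j) (a i)) w0 * crd (a j) w1 * crd (b i) w2) + (crd (sc (a j) (a i)) w0 * crd (b j) w1 * crd (b i) w2) + (crd (pr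 (a j) (a i)) w0 * crd (b j) w1 * crd (b i) w2) + (crd (b j) w0 * crd (a i) w1 * crd (sc (b i) (a j)) w2) + (crd (b j) w0 * crd (a i) w1 * crd (pr (b i) (a j)) w2) + (crd (a j) w0 * crd (a i) w1 * crd (pr (b i) (b j)) w2) - (crd (a j) w0 * crd (a i) w1 * crd (pr (b j) (b i)) w2) - (crd (pr (a j) (b i)) w0 * crd (a i) w1 * crd (b j) w2))) => i j /=.
    rewrite !ffunE /= /R1t /R2t /circ /odot /star !crdD; ring.
  rewrite E ?hP ?r1 ?r2; ring.
- move=> HP3; have hP3 q : P3 sc pr a b q = 0 by rewrite HP3 ffunE.
  split.
  apply/ffunP => [[[w0 w1] w2]]; rewrite ffunE.
  have E : P1 sc pr a b ((w0, w1), w2) = 0 - P3 sc pr a b ((w0, w1), w2) - P3 sc pr a b ((w1, w0), w2) + P3 sc pr a b ((w1, w2), w0) - RS2 sc pr a b b a w2 w0 w1 - RS2 sc pr a b b a w2 w1 w0 - RS2 sc pr a b a b w1 w0 w2.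
    apply/eqP; rewrite -subr_eq0; apply/eqP.
    rewrite !ffE ?RS1E ?RS2E ?add0r ?opprD ?opprK ?dsumN ?dsumD.
    apply: (trick (S := fun i j => 0 + (crd (a j) w0 * crd (a i) w1 * crd (pr (b i) (b j)) w2) + (crd (a j) w0 * crd (pr (a i) (b j)) w1 * crd (b i) w2) - (crd (pr (a j) (b i)) w0 * crd (a i) w1 * crd (b j) w2) - (crd (a j) w0 * crd (pr (b j) (a i)) w1 * crd (b i) w2) - (crd (b j) w0 * crd (pr (a j) (a i)) w1 * crd (b i) w2) - (crd (pr (b j) (a i)) w0 * crd (a j) w1 * crd (b i) w2) - (crd (pr (a j) (a i)) w0 * crd (b j) w1 * crd (b i) w2) - (crd (a j) w0 * crd (a i) w1 * crd (pr (b j) (b i)) w2))) => i j /=.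
    rewrite !ffunE /= /R1t /R2t /circ /odot /star !crdD; ring.
  rewrite E ?hP3 ?r1 ?r2; ring.
  apply/ffunP => [[[w0 w1] w2]]; rewrite ffunE.
  have E : P2 sc pr a b ((w0, w1), w2) = 0 + P3 sc pr a b ((w0, w1), w2) + P3 sc pr a b ((w1, w0), w2) + RS1 sc pr a b b a w2 w1 w0 + RS2 sc pr a b b a w2 w1 w0.
    apply/eqP; rewrite -subr_eq0; apply/eqP.
    rewrite !ffE ?RS1E ?RS2E ?add0r ?opprD ?opprK ?dsumN ?dsumD.
    apply: (trick (S := fun i j => 0 + (crd (pr (a j) (b i)) w0 * crd (a i) w1 * crd (b j) w2) - (crd (a j) w0 * crd (a i) w1 * crd (sc (b i) (b j)) w2) - (crd (a j) w0 * crd (a i) w1 * crd (pr (b i) (b j)) w2) - (crd (sc (b j) (a i)) w0 * crd (a j) w1 * crd (b i) w2) - (crd (sc (a j) (a i)) w0 * crd (b j) w1 * crd (b i) w2) - (crd (a j) w0 * crd (pr (a i) (b j)) w1 * crd (b i) w2))) => i j /=.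
    rewrite !ffunE /= /R1t /R2t /circ /odot /star !crdD; ring.
  rewrite E ?hP3 ?r1 ?r2; ring.
- case=> HP1 HP2; have hP1 q : P1 sc pr a b q = 0 by rewrite HP1 ffunE.
  have hP2 q : P2 sc pr a b q = 0 by rewrite HP2 ffunE.
  split.
  apply/ffunP => [[[w0 w1] w2]]; rewrite ffunE.
  have E : P4 sc pr a b ((w0, w1), w2) = 0 + P1 sc pr a b ((w1, w0), w2) + P2 sc pr a b ((w1, w2), w0) + RS2 sc pr a b b a w2 w0 w1 - RS1 sc pr a b a b w1 w2 w0.
    apply/eqP; rewrite -subr_eq0; apply/eqP.
    rewrite !ffE ?RS1E ?RS2E ?add0r ?opprD ?opprK ?dsumN ?dsumD.
    apply: (trick (S := fun i j => 0 + (crd (a j) w0 * crd (a i) w1 * crd (pr (b j) (b i)) w2) + (crd (b j) w0 * crd (pr (a j) (a i)) w1 * crd (b i) w2) + (crd (sc (a j) (b i)) w0 * crd (a i) w1 * crd (b j) w2) + (crd (pr (a j) (b i)) w0 * crd (a i) w1 * crd (b j) w2))) => i j /=.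
    rewrite !ffunE /= /R1t /R2t /circ /odot /star !crdD; ring.
  rewrite E ?hP1 ?hP2 ?r1 ?r2; ring.
  apply/ffunP => [[[w0 w1] w2]]; rewrite ffunE.
  have E : P5 sc pr a b ((w0, w1), w2) = 0 - P1 sc pr a b ((w1, w0), w2) - P1 sc pr a b ((w1, w2), w0) - P2 sc pr a b ((w1, w0), w2) - P2 sc pr a b ((w1, w2), w0) + RS1 sc pr a b b a w2 w0 w1 + RS1 sc pr a b a b w1 w2 w0 + RS2 sc pr a b a b w1 w2 w0.
    apply/eqP; rewrite -subr_eq0; apply/eqP.
    rewrite !ffE ?RS1E ?RS2E ?add0r ?opprD ?opprK ?dsumN ?dsumD.
    apply: (trick (S := fun i j => 0 + (crd (a j) w0 * crd (a i) w1 * crd (sc (b j) (b i)) w2) - (crd (a j) w0 * crd (sc (a i) (b j)) w1 * crd (b i) w2) - (crd (a j) w0 * crd (pr (a i) (b j)) w1 * crd (b i) w2) - (crd (a j) w0 * crd (sc (b j) (a i)) w1 * crd (b i) w2) - (crd (a j) w0 * crd (pr (b j) (a i)) w1 * crd (b i) w2) - (crd (b j) w0 * crd (sc (a j) (a i)) w1 * crd (b i) w2) - (crd (b j) w0 * crd (pr (a j) (a i)) w1 * crd (b i) w2) - (crd (sc (a j) (b i)) w0 * crd (a i) w1 * crd (b j) w2))) => i j /=.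
    rewrite !ffunE /= /R1t /R2t /circ /odot /star !crdD; ring.
  rewrite E ?hP1 ?hP2 ?r1 ?r2; ring.
- case=> HP4 HP5; have hP4 q : P4 sc pr a b q = 0 by rewrite HP4 ffunE.
  have hP5 q : P5 sc pr a b q = 0 by rewrite HP5 ffunE.
  apply/ffunP => [[[w0 w1] w2]]; rewrite ffunE.
  have E : P sc pr b a ((w0, w1), w2) = 0 - P4 sc pr a b ((w1, w2), w0) - P5 sc pr a b ((w1, w2), w0) + RS1 sc pr a b b a w0 w1 w2 + RS2 sc pr a b b a w0 w1 w2.
    apply/eqP; rewrite -subr_eq0; apply/eqP.
    rewrite !ffE ?RS1E ?RS2E ?add0r ?opprD ?opprK ?dsumN ?dsumD.
    apply: (trick (S := fun i j => 0 + (crd (b j) w0 * crd (b i) w1 * crd (sc (a i) (a j)) w2) + (crd (b j) w0 * crd (b i) w1 * crd (pr (a j) (a i)) w2) + (crd (b j) w0 * crd (a i) w1 * crd (sc (b i) (a j)) w2) + (crd (b j) w0 * crd (a i) w1 * crd (pr (b i) (a j)) w2) + (crd (b j) w0 * crd (a i) w1 * crd (sc (a j) (b i)) w2) + (crd (b j) w0 * crd (a i) w1 * crd (pr (a j) (b i)) w2))) => i j /=.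
    rewrite !ffunE /= /R1t /R2t /circ /odot /star !crdD; ring.
  rewrite E ?hP4 ?hP5 ?r1 ?r2; ring.
- move=> HPt; have hPt q : P sc pr b a q = 0 by rewrite HPt ffunE.
  apply/ffunP => [[[w0 w1] w2]]; rewrite ffunE.
  have E : P sc pr a b ((w0, w1), w2) = 0 + P sc pr b a ((w0, w1), w2) - RS2 sc pr a b b a w2 w0 w1 + RS1 sc pr a b b a w2 w1 w0 - RS1 sc pr a b b a w0 w1 w2 - RS2 sc pr a b b a w0 w1 w2 - RS2 sc pr a b a b w1 w0 w2.
    apply/eqP; rewrite -subr_eq0; apply/eqP.
    rewrite !ffE ?RS1E ?RS2E ?add0r ?opprD ?opprK ?dsumN ?dsumD.
    apply: (trick (S := fun i j => 0 - (crd (b j) w0 * crd (b i) w1 * crd (sc (a i) (a j)) w2) - (crd (b j) w0 * crd (b i) w1 * crd (pr (a j) (a i)) w2) - (crd (a j) w0 * crd (pr (b j) (a i)) w1 * crd (b i) w2) - (crd (b j) w0 * crd (pr (a j) (a i)) w1 * crd (b i) w2) - (crd (sc (b j) (a i)) w0 * crd (a j) w1 * crd (b i) w2) - (crd (pr (b j) (a i)) w0 * crd (a j) w1 * crd (b i) w2) - (crd (sc (a j) (a i)) w0 * crd (b j) w1 * crd (b i) w2) - (crd (pr (a j) (a i)) w0 * crd (b j) w1 * crd (b i) w2) - (crd (b j) w0 * crd (a i) w1 * crd (sc (b i) (a j)) w2) - (crd (b j) w0 * crd (a i) w1 * crd (pr (a j) (b i)) w2))) => i j /=.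
    rewrite !ffunE /= /R1t /R2t /circ /odot /star !crdD; ring.
  rewrite E ?hPt ?r1 ?r2; ring.
Qed.
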